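(* Let $n\ge 2$, let $\mathcal{S}\subseteq(\mathbb{C}^d)^{\otimes n}$ be the permutation-symmetric subspace, let $|\psi\rangle\in\mathcal{S}$ and let $X$ be a $d\times d$ complex matrix with $X_{(1)}|\psi\rangle\in\mathcal{S}$. Then for all nonnegative integers $p_1,\ldots,p_n$ with $p_1+\cdots+p_n=p$, $$X^p_{(1)}|\psi\rangle=X^{p_1}\otimes X^{p_2}\otimes\cdots\otimes X^{p_n}|\psi\rangle.$$ If $X$ is invertible, the same holds for all integers $p_1,\ldots,p_n$ (possibly negative) with $p_1+\cdots+p_n=p$.
   Context: $\mathcal{S}$ is the set of vectors in $(\mathbb{C}^d)^{\otimes n}$ invariant under all permutations of the $n$ tensor factors. $X^p_{(1)}$ denotes $X^p\otimes\mathbb{I}\otimes\cdots\otimes\mathbb{I}$ on $(\mathbb{C}^d)^{\otimes n}$. *)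

(* Defs.v *)
From mathcomp Require Import all_boot all_algebra complex.
From mathcomp Require Import fingroup perm.
From mathcomp Require Import Rstruct.
Set Implicit Arguments. Unset Strict Implicit. Unset Printing Implicit Defensive.
Import GRing.Theory Num.Theory.
Local Open Scope ring_scope.

Definition C : Type := Rdefinitions.R[i].

(* Computational basis indices of (C^d)^{\otimes n}: functions 'I_n -> 'I_d. *)
Definition idx (n d : nat) := {ffun 'I_n -> 'I_d}.

(* Vectors in (C^d)^{\otimes n}, as coordinate functions on the product basis. *)
Definition tvec (n d : nat) := idx n d -> C.

(* (A_0 \otimes ... \otimes A_{n-1}) applied to psi. *)
Definition tensor_apply (n d : nat) (A : 'I_n -> 'M[C]_d) (psi : tvec n d)
  : tvec n d :=
  fun i => \sum_(j : idx n d) (\prod_(k < n) A k (i k) (j k)) * psi j.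

Definition symmetric_vec (n d : nat) (psi : tvec n d) : Prop :=
  forall (s : 'S_n) (i : idx n d), psi [ffun k => i (s k)] = psi i.

(* Y_(1) = Y \otimes I \otimes ... \otimes I, acting on the first factor. *)
Definition first_factor (n d : nat) (Y : 'M[C]_d) : 'I_n -> 'M[C]_d :=
  fun k => if val k == 0%N then Y else 1%:M.

Definition mxpowz (d : nat) (X : 'M[C]_d) (z : int) : 'M[C]_d :=
  match z with
  | Posz m => X ^+ m
  | Negz m => (invmx X) ^+ m.+1
  end.

(* Main.v *)
Require Import Defs.
From mathcomp Require Import fingroup perm.
From mathcomp Require Import all_boot all_algebra complex.
From mathcomp Require Import Rstruct.
From Stdlib Require Import FunctionalExtensionality.
Import GRing.Theory Num.Theory.
Local Open Scope ring_scope.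
Set Implicit Arguments. Unset Strict Implicit.

Lemma TA_ext n d (A B : 'I_n -> 'M[C]_d) psi :
  (forall k, A k = B k) -> tensor_apply A psi = tensor_apply B psi.
Proof. by move=> H; have -> : A = B by apply: functional_extensionality. Qed.

Lemma TA_comp n d (A B : 'I_n -> 'M[C]_d) (psi : tvec n d) :
  tensor_apply A (tensor_apply B psi) = tensor_apply (fun k => A k *m B k) psi.
Proof.
apply: functional_extensionality => i; rewrite /tensor_apply.
transitivity (\sum_(l : idx n d) \sum_(j : idx n d)
   (\prod_(k < n) A k (i k) (j k)) * ((\prod_(k < n) B k (j k) (l k)) * psi l)).
  rewrite exchange_big /=; apply: eq_bigr => j _; by rewrite big_distrr.
apply: eq_bigr => l _.
rewrite (eq_bigr (fun k => \sum_(a < d) A k (i k) a * B k a (l k))); last by move=> k _; rewrite mxE.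
rewrite bigA_distr_bigA /= big_distrl /=.
apply: eq_bigr => j _; by rewrite mulrA -big_split.
Qed.

Definition E n d (k : 'I_n) (M : 'M[C]_d) : 'I_n -> 'M[C]_d :=
  fun j => if j == k then M else 1%:M.

Lemma TA_perm n d (A : 'I_n -> 'M[C]_d) (psi : tvec n d) (s : 'S_n) (i : idx n d) :
  symmetric_vec psi ->
  tensor_apply A psi [ffun k => i (s k)] = tensor_apply (fun k => A (s^-1 k)%g) psi i.
Proof.
move=> Hs; rewrite /tensor_apply.
pose J (j : idx n d) : idx n d := [ffun k => j (s k)].
have Jinj : injective J.
  move=> j1 j2 /ffunP H; apply/ffunP => k.
  by have := H ((s^-1)%g k); rewrite !ffunE permKV.
rewrite (reindex_inj Jinj) /=; apply: eq_bigr => j _.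
rewrite Hs; congr (_ * _).
rewrite [RHS](reindex_inj (@perm_inj _ s)) /=.
apply: eq_bigr => k _; by rewrite !ffunE permK.
Qed.

Definition Qp n d (k0 : 'I_n) (M : 'M[C]_d) (phi : tvec n d) :=
  forall k, tensor_apply (E k M) phi = tensor_apply (E k0 M) phi.

Lemma Q_of_sym n d (k0 : 'I_n) (M : 'M[C]_d) (psi : tvec n d) :
  symmetric_vec psi -> symmetric_vec (tensor_apply (E k0 M) psi) -> Qp k0 M psi.
Proof.
move=> Hs H2 k; apply: functional_extensionality => i.
rewrite -(H2 (tperm k0 k) i) TA_perm //; congr (tensor_apply _ psi i).
apply: functional_extensionality => j; rewrite /E tpermV.
have -> : (tperm k0 k j == k0) = (j == k) by rewrite -{2}(tpermR k0 k) (inj_eq (@perm_inj _ _)).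
by [].
Qed.

Lemma Q_pres n d (k0 : 'I_n) (M N : 'M[C]_d) (phi : tvec n d) :
  M *m N = N *m M -> Qp k0 M phi -> Qp k0 M (tensor_apply (E k0 N) phi).
Proof.
move=> HMN HQ k; rewrite !TA_comp.
transitivity (tensor_apply (E k0 N) (tensor_apply (E k M) phi)).
  rewrite TA_comp; apply: TA_ext => j; rewrite /E.
  by case: (j == k); case: (j == k0); rewrite ?mul1mx ?mulmx1.
rewrite HQ TA_comp; apply: TA_ext => j; rewrite /E.
by case: (j == k0); rewrite ?mul1mx ?mulmx1.
Qed.

Lemma NL n d (k0 : 'I_n) (M : 'M[C]_d) (p : nat) : forall (phi : tvec n d),
  Qp k0 M phi -> forall ps : 'I_n -> nat, (\sum_(k < n) ps k)%N = p ->
  tensor_apply (fun k => M ^+ ps k) phi = tensor_apply (E k0 (M ^+ p)) phi.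
Proof.
elim: p => [|p IH] phi HQ ps Hs.
  apply: TA_ext => k; rewrite /E expr0.
  have -> : ps k = 0%N.
    by move/eqP: Hs; rewrite sum_nat_eq0 => /forallP /(_ k) /implyP /(_ isT) /eqP.
  by rewrite expr0 idmxE; case: ifP.
case: (pickP (fun k => 0 < ps k)%N) => [k Hk | H]; last first.
  exfalso; suff : (\sum_(k < n) ps k)%N = 0%N by rewrite Hs.
  by apply: big1 => k _; move: (H k) => /= /negbT; rewrite lt0n negbK => /eqP.
pose a := fun j => (ps j - (j == k))%N.
have Hsa : (\sum_(j < n) a j)%N = p.
  move: Hs; rewrite (bigD1 k) // [in X in _ -> X](bigD1 k) //= /a eqxx.
  have -> : (\sum_(i < n | i != k) (ps i - (i == k)))%N = (\sum_(i < n | i != k) ps i)%N.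
    by apply: eq_bigr => j /negbTE ->; rewrite subn0.
  move: Hk => /=; case: (ps k) => // m _; rewrite subn1 /= addSn => [[]] //.
transitivity (tensor_apply (fun j => M ^+ a j) (tensor_apply (E k M) phi)).
  rewrite TA_comp; apply: TA_ext => j; rewrite /E /a.
  case: eqP => [->|_]; last by rewrite subn0 mulmx1.
  by move: Hk => /=; case: (ps k) => // m _; rewrite subn1 /= mulmxE exprSr.
rewrite HQ IH //; first by rewrite TA_comp; apply: TA_ext => j; rewrite /E;
  case: ifP; rewrite ?mulmx1 // mulmxE exprSr.
apply: Q_pres => //; by rewrite mulmxE.
Qed.

Lemma QY n d (k0 : 'I_n) (X : 'M[C]_d) (phi : tvec n d) :
  X \in unitmx -> Qp k0 X phi -> Qp k0 (invmx X) phi.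
Proof.
move=> HX HQ k; case: (eqVneq k k0) => [->//|Hne].
transitivity (tensor_apply (E k0 (invmx X)) (tensor_apply (E k (invmx X)) (tensor_apply (E k0 X) phi))).
  rewrite !TA_comp; apply: TA_ext => j; rewrite /E.
  case: (eqVneq j k) => [->|_]; first by rewrite (negbTE Hne) !mul1mx mulmx1.
  by case: (j == k0); rewrite ?mul1mx ?mulmx1 // mulVmx.
rewrite -(HQ k) !TA_comp; apply: TA_ext => j; rewrite /E.
case: (eqVneq j k) => [->|_]; first by rewrite (negbTE Hne) mul1mx mulVmx.
by case: (j == k0); rewrite ?mul1mx ?mulmx1.
Qed.

Lemma XY d (X : 'M[C]_d) (b a : nat) : X \in unitmx ->
  X ^+ a * (invmx X) ^+ b = X ^+ (a - b) * (invmx X) ^+ (b - a).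
Proof.
move=> HX; have HXY : X * invmx X = 1 by rewrite -mulmxE mulmxV // idmxE.
elim: b a => [|b IH] a; first by rewrite subn0 sub0n !expr0 mulr1.
rewrite exprSr mulrA IH.
case: (leqP a b) => Hab.
  have -> : (a - b = 0)%N by apply/eqP; rewrite subn_eq0.
  have -> : (a - b.+1 = 0)%N by apply/eqP; rewrite subn_eq0 ltnW.
  by rewrite subSn // exprSr mulrA.
have -> : (b - a = 0)%N by apply/eqP; rewrite subn_eq0 ltnW.
have -> : (b.+1 - a = 0)%N by apply/eqP; rewrite subn_eq0.
have -> : (a - b = (a - b.+1).+1)%N by rewrite subnSK.
by rewrite !expr0 mulr1 exprSr -mulrA HXY mulr1.
Qed.

Lemma powAB d (X : 'M[C]_d) (a b : nat) : X \in unitmx ->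
  X ^+ a * (invmx X) ^+ b = mxpowz X (a%:Z - b%:Z).
Proof.
move=> HX; rewrite XY //.
case: (leqP a b) => Hab.
  have -> : (a - b = 0)%N by apply/eqP; rewrite subn_eq0.
  rewrite expr0 mul1r.
  have -> : (a%:Z - b%:Z = - (b - a)%N%:Z) by rewrite -subzn // opprB.
  case Hc: (b - a)%N => [|c]; first by rewrite /= expr0.
  by rewrite -NegzE.
have -> : (b - a = 0)%N by apply/eqP; rewrite subn_eq0 ltnW.
by rewrite expr0 mulr1 subzn // ltnW.
Qed.

Lemma FF n d (M : 'M[C]_d) : first_factor (n:=n.+1) M = E ord0 M.
Proof. by apply: functional_extensionality => -[[|j] Hj]. Qed.

Definition pa (z : int) : nat := match z with Posz m => m | Negz _ => 0%N end.
Definition pb (z : int) : nat := match z with Posz _ => 0%N | Negz m => m.+1 end.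

Lemma powz_split d (X : 'M[C]_d) z : mxpowz X z = X ^+ pa z *m (invmx X) ^+ pb z.
Proof. by case: z => m /=; rewrite ?expr0 ?mulmx1 ?mul1mx. Qed.

Lemma zsplit z : z = (pa z)%:Z - (pb z)%:Z.
Proof. by case: z => m /=; rewrite ?subr0 ?sub0r -?NegzE. Qed.

Unset Implicit Arguments.
Theorem corollary1 (n d : nat) (psi : tvec n d) (X : 'M[C]_d) :
  (2 <= n)%N ->
  symmetric_vec psi ->
  symmetric_vec (tensor_apply (first_factor (n:=n) X) psi) ->
  (forall (p : nat) (ps : 'I_n -> nat), (\sum_(k < n) ps k)%N = p ->
     tensor_apply (first_factor (n:=n) (X ^+ p)) psi
     = tensor_apply (fun k => X ^+ ps k) psi)
  /\
  (X \in unitmx ->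
   forall (p : int) (ps : 'I_n -> int), \sum_(k < n) ps k = p ->
     tensor_apply (first_factor (n:=n) (mxpowz X p)) psi
     = tensor_apply (fun k => mxpowz X (ps k)) psi).
Proof.
case: n psi => [|[|n]] psi // _ Hs H2.
rewrite !FF in H2 *.
have HQ := Q_of_sym Hs H2.
split.
  by move=> p ps Hp; rewrite (NL HQ Hp).
move=> HX p ps Hp; rewrite FF.
pose a k := pa (ps k); pose b k := pb (ps k).
have HQY := QY HX HQ.
transitivity (tensor_apply (fun k => X ^+ a k) (tensor_apply (fun k => invmx X ^+ b k) psi)); last first.
  by rewrite TA_comp; apply: TA_ext => k; rewrite powz_split.
rewrite (NL HQY (erefl _)).
have HQ' : Qp ord0 X (tensor_apply (E ord0 (invmx X ^+ (\sum_(k < n.+2) b k))) psi).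
  apply: Q_pres => //; rewrite !mulmxE; apply: commrX.
  by rewrite /GRing.comm -!mulmxE mulmxV // mulVmx.
rewrite (NL HQ' (erefl _)) TA_comp; apply: TA_ext => k; rewrite /E.
case: ifP => _; last by rewrite mulmx1.
rewrite mulmxE powAB // -Hp; congr (mxpowz X _).
rewrite (eq_bigr (fun k => (a k)%:Z - (b k)%:Z)); last by move=> i _; rewrite -zsplit.
rewrite sumrB; congr (_ - _); by rewrite (big_morph Posz PoszD (erefl _)).
Qed.
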